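(* Let $q\ge2$, $r\ge2$, $t,s\ge0$ be integers, let $M=\sum_{i=1}^{t}A_{t-i,s}(r-1)+\sum_{i=1}^{s}A_{t,s-i}(r-1)+1$, and let $\mathbf{y}_1,\dots,\mathbf{y}_M$ be distinct sequences and $\mathbf{x}\in J_r^*$ a sequence with $\mathbf{y}_i\in\mathcal{B}_{t,s}(\mathbf{x})$ for all $i\in[M]$. Write $\phi(\mathbf{y}_i)=\mathbf{v}_i=(v_{i,1},\dots,v_{i,r})$ and $\phi(\mathbf{x})=\mathbf{u}=(u_1,\dots,u_r)$. For $j\in[r]$ let $a_j=\min_{i\in[M]}v_{i,j}$, $b_j=\max_{i\in[M]}v_{i,j}$, and for each integer $k$ let $c_{j,k}$ be the number of indices $i\in[M]$ with $v_{i,j}=k$ (so $\sum_{k=a_j}^{b_j}c_{j,k}=M$). Then for every $j\in[r]$: (1) $b_j-t\le u_j\le a_j+s$; (2) for every integer $k$ with $a_j\le k<u_j$, $c_{j,k}\le A_{t,\,s-u_j+k}(r-1)$; (3) for every integer $k$ with $u_j<k\le b_j$, $c_{j,k}\le A_{t-k+u_j,\,s}(r-1)$.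
   Context: $\Sigma_q=\{0,\dots,q-1\}$. Every finite string $\mathbf{x}$ over $\Sigma_q$ is uniquely $c_1^{u_1}\cdots c_r^{u_r}$ with $c_i\ne c_{i+1}$, $u_i\ge1$; $r$ is its number of runs, $J_r^*$ the set of strings with exactly $r$ runs, and $\phi(\mathbf{x})=(u_1,\dots,u_r)\in\mathbb{Z}_+^r$ its run-length vector. The sticky-insdel ball $\mathcal{B}_{t,s}(\mathbf{x})$ (strings obtainable by at most $t$ sticky insertions, i.e. duplications of a symbol within its run, and at most $s$ sticky deletions, i.e. deletions of a symbol from a run of length $\ge2$) is the set of strings $c_1^{v_1}\cdots c_r^{v_r}$ with $(v_1,\dots,v_r)\in\mathbb{Z}_+^r$, $\sum_i\max\{0,u_i-v_i\}\le s$ and $\sum_i\max\{0,v_i-u_i\}\le t$. The numbers $A_{t,s}(r)$ (integers $t,s$, $r\ge1$): $A_{t,s}(r)=0$ if $t<0$ or $s<0$; $A_{t,s}(1)=t+s+1$ for $t,s\ge0$; for $r\ge2$, $t,s\ge0$: $A_{t,s}(r)=\sum_{i=1}^{t}A_{t-i,s}(r-1)+\sum_{i=1}^{s}A_{t,s-i}(r-1)+A_{t,s}(r-1)$. *)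

(* Defs.v *)
From mathcomp Require Import all_boot all_order all_algebra.
Set Implicit Arguments. Unset Strict Implicit. Unset Printing Implicit Defensive.
Import Order.TTheory GRing.Theory Num.Theory.

(* Run-length encoding: x = c_1^{u_1} ... c_r^{u_r}, c_i <> c_{i+1}, u_i >= 1 *)
Fixpoint rle (T : eqType) (x : seq T) : seq (T * nat) :=
  match x with
  | [::] => [::]
  | a :: x' =>
      match rle x' with
      | [::] => [:: (a, 1)]
      | (b, n) :: rest => if a == b then (b, n.+1) :: rest
                          else (a, 1) :: (b, n) :: rest
      end
  end.

Definition nruns (T : eqType) (x : seq T) : nat := size (rle x).
Definition run_syms (T : eqType) (x : seq T) : seq T := map fst (rle x).
Definition phi (T : eqType) (x : seq T) : seq nat := map snd (rle x).

Definition expand (T : Type) (c : seq T) (v : seq nat) : seq T :=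
  flatten [seq nseq p.2 p.1 | p <- zip c v].

(* sticky-insdel ball B_{t,s}(x); truncated subtraction m - n = max{0, m - n} *)
Definition in_ball (T : eqType) (t s : nat) (x y : seq T) : Prop :=
  exists v : seq nat,
    [/\ size v = nruns x, all (fun n => 0 < n) v,
        y = expand (run_syms x) v,
        (\sum_(i < size v) (nth 0 (phi x) i - nth 0 v i) <= s)%N &
        (\sum_(i < size v) (nth 0 v i - nth 0 (phi x) i) <= t)%N].

(* A_{t,s}(r) for t, s >= 0 (r >= 1); A_nat 0 is a junk value *)
Fixpoint A_nat (r t s : nat) : nat :=
  match r with
  | 0 => 0
  | r'.+1 =>
      match r' with
      | 0 => t + s + 1
      | _ => (\sum_(1 <= i < t.+1) A_nat r' (t - i) s
              + \sum_(1 <= i < s.+1) A_nat r' t (s - i)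
              + A_nat r' t s)%N
      end
  end.

Definition A (t s : int) (r : nat) : nat :=
  match t, s with
  | Posz tn, Posz sn => A_nat r tn sn
  | _, _ => 0
  end.

(* Main.v *)
Require Import Defs.
From mathcomp Require Import all_boot all_order all_algebra.
From mathcomp Require Import zify.
Import Order.TTheory GRing.Theory Num.Theory.

Fixpoint devp (w u : seq nat) : nat :=
  match w, u with
  | a :: w', b :: u' => (a - b) + devp w' u'
  | _, _ => 0
  end.

Fixpoint B (n t s : nat) : nat :=
  match n with
  | 0 => 1
  | n'.+1 => (\sum_(1 <= i < t.+1) B n' (t - i) s
              + \sum_(1 <= i < s.+1) B n' t (s - i) + B n' t s)%N
  end.

Lemma A_B n t s : A_nat n.+1 t s = B n.+1 t s.
Proof.
elim: n t s => [|n IH] t s.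
  by rewrite /= !sum_nat_const_nat !muln1 !subn1 /=.
have -> : A_nat n.+2 t s = (\sum_(1 <= i < t.+1) A_nat n.+1 (t - i) s
              + \sum_(1 <= i < s.+1) A_nat n.+1 t (s - i) + A_nat n.+1 t s)%N by [].
rewrite IH /=; congr (_ + _ + _); apply: eq_bigr => i _; exact: IH.
Qed.

Fixpoint E (u : seq nat) (t s : nat) : seq (seq nat) :=
  match u with
  | [::] => [:: [::]]
  | u0 :: u' =>
      flatten [seq map (cons (u0 + i)) (E u' (t - i) s) | i <- index_iota 1 t.+1]
      ++ flatten [seq map (cons (u0 - i)) (E u' t (s - i)) | i <- index_iota 1 s.+1]
      ++ map (cons u0) (E u' t s)
  end.

Lemma size_E u t s : size (E u t s) = B (size u) t s.
Proof.
elim: u t s => [|u0 u IH] t s //=.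
rewrite !size_cat !size_flatten size_map IH addnA; congr (_ + _ + _);
  rewrite sumnE /shape -map_comp big_map; apply: eq_bigr => i _ /=;
  by rewrite size_map IH.
Qed.

Lemma mem_E u w t s : size w = size u -> devp w u <= t -> devp u w <= s ->
  w \in E u t s.
Proof.
elim: u w t s => [|b u IH] [|a w] t s //=.
move=> [] hs hp hn.
rewrite !mem_cat.
case: (ltngtP a b) => hab.
- apply/orP; right; apply/orP; left.
  apply/flatten_mapP; exists (b - a).
    rewrite mem_index_iota; lia.
  apply/mapP; exists w; last by congr cons; lia.
  apply: IH => //; lia.
- apply/orP; left.
  apply/flatten_mapP; exists (a - b).
    rewrite mem_index_iota; lia.
  apply/mapP; exists w; last by congr cons; lia.
  apply: IH => //; lia.
- apply/orP; right; apply/orP; right.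
  apply/mapP; exists w; last by rewrite hab.
  apply: IH => //; lia.
Qed.

Lemma count_bound (I : finType) (P : pred I) (g : I -> seq nat) (u : seq nat) t s :
  {in P &, injective g} ->
  (forall i, P i -> [/\ size (g i) = size u, devp (g i) u <= t & devp u (g i) <= s]) ->
  #|P| <= B (size u) t s.
Proof.
move=> ginj hg.
rewrite -size_E cardE -(size_map g).
apply: uniq_leq_size.
  rewrite map_inj_in_uniq ?enum_uniq //.
  by move=> i j; rewrite !mem_enum; apply: ginj.
move=> w /mapP [i]; rewrite mem_enum => Pi ->.
by case: (hg i Pi) => *; apply: mem_E.
Qed.
Lemma rle_props (T : eqType) (x : seq T) :
  sorted (fun a b => a != b) (run_syms x) /\ all (fun n => 0 < n) (phi x).
Proof.
rewrite /run_syms /phi.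
elim: x => [|a x [IH1 IH2]] //=.
case E: (rle x) IH1 IH2 => [|[b m] l] //= IH1 IH2.
case: ifP => [_|/negbT ne] /=.
  by split => //; case/andP: IH2.
by rewrite ne IH1 IH2.
Qed.

Lemma rle_cons (T : eqType) (a : T) l : rle (a :: l) =
  match rle l with
  | [::] => [:: (a, 1)]
  | (b, n) :: rest => if a == b then (b, n.+1) :: rest
                      else (a, 1) :: (b, n) :: rest
  end.
Proof. by []. Qed.

Lemma rle_nseq (T : eqType) (a : T) n rest :
  0 < n -> (forall b m l, rle rest = (b, m) :: l -> a != b) ->
  rle (nseq n a ++ rest) = (a, n) :: rle rest.
Proof.
move=> + h; elim: n => [|[|n] IH] // _.
  rewrite /=; case E: (rle rest) => [|[b m] l] //.
  by rewrite ifN //; apply: h E.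
rewrite -[nseq n.+2 a ++ rest]/(a :: (nseq n.+1 a ++ rest)).
by rewrite rle_cons IH // eqxx.
Qed.

Lemma rle_expand (T : eqType) (c : seq T) v :
  sorted (fun a b => a != b) c -> all (fun n => 0 < n) v -> size c = size v ->
  rle (expand c v) = zip c v.
Proof.
rewrite /expand.
elim: c v => [|a c IH] [|n v] //= hs /andP [hn hv] [hsz].
have hc : sorted (fun a b => a != b) c by case: c hs {IH hsz} => //= b c /andP [].
rewrite rle_nseq //; first by rewrite IH.
rewrite IH //.
case: c v hs {IH hc hsz hv} => [|b c] [|m v] //= /andP [hab _] b' m' l [] <- _ _.
exact: hab.
Qed.

Lemma sum_devp a b : size a = size b ->
  \sum_(i < size a) (nth 0 a i - nth 0 b i) = devp a b.
Proof.
elim: a b => [|x a IH] [|y b] //=; first by rewrite big_ord0.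
move=> [hs]; rewrite big_ord_recl /=; congr (_ + _).
by rewrite -IH //; apply: eq_bigr => i _; rewrite lift0.
Qed.

Lemma devp_nth w u j : size w = size u -> nth 0 w j - nth 0 u j <= devp w u.
Proof.
elim: w u j => [|x w IH] [|y u] [|j] //= [hs]; first exact: leq_addr.
by apply: leq_trans (IH _ _ hs) (leq_addl _ _).
Qed.

Lemma devp_cat a1 a2 c1 c2 : size a1 = size c1 ->
  devp (a1 ++ a2) (c1 ++ c2) = devp a1 c1 + devp a2 c2.
Proof.
elim: a1 c1 => [|x a IH] [|y c] //= [hs]; by rewrite IH // addnA.
Qed.

Lemma ball_props (T : eqType) t s (x z : seq T) : in_ball t s x z ->
  [/\ size (phi z) = nruns x, z = expand (run_syms x) (phi z),
      devp (phi z) (phi x) <= t & devp (phi x) (phi z) <= s].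
Proof.
case=> v [hsz hpos hz hs ht].
have [hsort hposx] := rle_props _ x.
have szs : size (run_syms x) = size v by rewrite /run_syms size_map hsz.
have hphi : phi z = v.
  by rewrite /phi hz rle_expand // -/(unzip2 _) unzip2_zip // szs.
have szx : size (phi x) = size v by rewrite /phi size_map hsz.
rewrite hphi; split => //.
  by rewrite -sum_devp.
by rewrite -sum_devp // szx.
Qed.

Definition remj (j : nat) (w : seq nat) := take j w ++ drop j.+1 w.

Lemma size_remj j w : j < size w -> size (remj j w) = (size w).-1.
Proof. move=> h; rewrite /remj size_cat size_take h size_drop; lia. Qed.

Lemma devp_remj j w u : j < size w -> size w = size u ->
  devp w u = devp (remj j w) (remj j u) + (nth 0 w j - nth 0 u j).
Proof.
move=> hj hs.
have hj' : j < size u by rewrite -hs.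
rewrite -{1}(cat_take_drop j w) -{1}(cat_take_drop j u) (drop_nth 0 hj) (drop_nth 0 hj').
rewrite /remj !devp_cat ?size_take ?hj ?hj' //= addnA; lia.
Qed.

Lemma remj_inj j w1 w2 : j < size w1 -> j < size w2 ->
  remj j w1 = remj j w2 -> nth 0 w1 j = nth 0 w2 j -> w1 = w2.
Proof.
move=> h1 h2 /eqP; rewrite /remj eqseq_cat ?size_take ?h1 ?h2 // => /andP [/eqP e1 /eqP e2] e.
by rewrite -(cat_take_drop j w1) -(cat_take_drop j w2) (drop_nth 0 h1) (drop_nth 0 h2) e1 e2 e.
Qed.

Theorem lemma3 (q r t s : nat) (hq : (2 <= q)%N) (hr : (2 <= r)%N)
  (y : 'I_((\sum_(1 <= i < t.+1) A (t - i)%:Z s r.-1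
             + \sum_(1 <= i < s.+1) A t (s - i)%:Z r.-1)%N.+1) -> seq 'I_q)
  (x : seq 'I_q)
  (hy : injective y)
  (hx : nruns x = r)
  (hball : forall i, in_ball t s x (y i)) :
  forall j : nat, (j < r)%N ->
    let v := fun i => nth 0%N (phi (y i)) j in
    let u := nth 0%N (phi x) j in
    let a := \big[minn/v ord0]_i v i in
    let b := (\max_i v i)%N in
    let c := fun k : nat => #|[pred i | v i == k]| in
    [/\ ((b%:Z - t%:Z <= u%:Z)%R /\ (u%:Z <= a%:Z + s%:Z)%R),
        (forall k : nat, (a <= k < u)%N ->
           (c k <= A t (s%:Z - u%:Z + k%:Z)%R r.-1)%N) &
        (forall k : nat, (u < k <= b)%N ->
           (c k <= A (t%:Z - k%:Z + u%:Z)%R s r.-1)%N)].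
Proof.
move=> j hj v u a b c.
have hsx : size (phi x) = r by rewrite /phi size_map.
have hP := fun i => @ball_props _ _ _ _ _ (hball i).
have hsy i : size (phi (y i)) = r by case: (hP i) => ->.
have hup i : v i <= u + t.
  case: (hP i) => h1 _ h3 _.
  have := devp_nth (phi (y i)) (phi x) j; rewrite h1 hx -hsx => /(_ erefl) h; rewrite /v /u; lia.
have hlo i : u <= v i + s.
  case: (hP i) => h1 _ _ h4.
  have := devp_nth (phi x) (phi (y i)) j; rewrite hsx hsy => /(_ erefl) h.
  rewrite /v /u; lia.
have hyinj i1 i2 : phi (y i1) = phi (y i2) -> i1 = i2.
  move=> e; apply: hy.
  by case: (hP i1) => _ -> _ _; case: (hP i2) => _ -> _ _; rewrite e.
have hjy i : j < size (phi (y i)) by rewrite hsy.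
have hjx : j < size (phi x) by rewrite hsx.
have hr1 : (size (phi x)).-1 = r.-1 by rewrite hsx.
have hAB (m1 m2 : nat) : A_nat r.-1 m1 m2 = B (size (remj j (phi x))) m1 m2.
  rewrite size_remj // hr1; have -> : r.-1 = (r - 2).+1 by lia.
  by rewrite A_B.
split.
- split.
    have : b <= u + t by apply/bigmax_leqP => i _; exact: hup.
    lia.
  have : u <= a + s.
    rewrite /a; apply: (big_ind (fun m => u <= m + s)) => //.
    by move=> m1 m2 h1 h2; rewrite /minn; case: ifP.
  lia.
- move=> k /andP [_ hk].
  case: (posnP (c k)) => [->//|]; move/card_gt0P => [i0]; rewrite inE /= => /eqP hi0.
  have hsk := hlo i0; rewrite hi0 in hsk.
  have -> : (s%:Z - u%:Z + k%:Z)%R = Posz (s - (u - k)) by lia.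
  rewrite /A hAB; apply: count_bound.
    move=> i1 i2; rewrite !inE /= => /eqP h1 /eqP h2 e; apply: hyinj.
    apply: (remj_inj j) => //; first exact: e.
    by move: h1 h2; rewrite /v => -> ->.
  move=> i; rewrite inE /= => /eqP hi.
  case: (hP i) => h1 _ h3 h4.
  split.
  + by rewrite !size_remj // hsx hsy.
  + by move: h3; rewrite (devp_remj j) // ?hsy ?hsx //; lia.
  + move: h4; rewrite (devp_remj j) // ?hsy ?hsx //.
    move: hi; rewrite /v /u => hi; lia.
- move=> k /andP [hk _].
  case: (posnP (c k)) => [->//|]; move/card_gt0P => [i0]; rewrite inE /= => /eqP hi0.
  have hsk := hup i0; rewrite hi0 in hsk.
  have -> : (t%:Z - k%:Z + u%:Z)%R = Posz (t - (k - u)) by lia.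
  rewrite /A hAB; apply: count_bound.
    move=> i1 i2; rewrite !inE /= => /eqP h1 /eqP h2 e; apply: hyinj.
    apply: (remj_inj j) => //; first exact: e.
    by move: h1 h2; rewrite /v => -> ->.
  move=> i; rewrite inE /= => /eqP hi.
  case: (hP i) => h1 _ h3 h4.
  split.
  + by rewrite !size_remj // hsx hsy.
  + move: h3; rewrite (devp_remj j) // ?hsy ?hsx //.
    move: hi; rewrite /v /u => hi; lia.
  + by move: h4; rewrite (devp_remj j) // ?hsy ?hsx //; lia.
Qed.
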